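(* Let $x\in V(D^+)\setminus\{s\}$ with $g^*(x)\neq\infty$, and let $y^*$ be a vertex with $g(x,y^* )=g^*(x)$. Then $(x,y^* )$ is valid, i.e. there exist a directed $sx$-path, a directed $y^*x$-path and a directed $y^*t$-path in $D^+$ which are mutually internally disjoint.
   Context: $G=(V,E,w)$ is a simple, connected, undirected graph with positive edge lengths, $s,t\in V$, $d(\cdot,\cdot)$ the shortest path distance in $G$. $D$ is the union of all shortest $st$-paths of $G$, and $D^+$ is the directed acyclic graph obtained from $D$ by orienting every edge toward $t$. $x\prec y$ means $x$ is an ancestor of $y$ in $D^+$ (a directed path of positive length from $x$ to $y$ exists). For $x\neq s$, $v\neq x$ is an $s$-dominator of $x$ if every directed path from $s$ to $x$ in $D^+$ contains $v$, and $I_s(x)$ is the $s$-dominator of $x$ closest to $x$ (every other $s$-dominator of $x$ is an $s$-dominator of $I_s(x)$). Symmetrically, for $x\neq t$, $v\neq x$ is a $t$-dominator of $x$ if every directed path from $x$ to $t$ in $D^+$ contains $v$, and $I_t(x)$ is the $t$-dominator closest to $x$. For $x\neq s$, $C(x)=\{v: I_s(x)\prec v\prec x\}$. For $x\neq s$ and $y\in V(D^+)$, $g(x,y)=d(y,x)$ if $y\in C(x)$ and $x\prec I_t(y)$, and $g(x,y)=\infty$ otherwise; $g^*(x)=\min_y g(x,y)$. Paths are internally disjoint if they share no vertex other than common endpoints. *)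

(* Defs.v *)
From HB Require Import structures.
From mathcomp Require Import all_boot all_order all_algebra.
From mathcomp Require Import classical_sets reals.

Set Implicit Arguments.
Unset Strict Implicit.
Unset Printing Implicit Defensive.

Import Order.TTheory GRing.Theory Num.Theory.
Local Open Scope ring_scope.
Local Open Scope classical_set_scope.

Section ShortestPathDAG.

Variable R : realType.
Variable V : finType.
Variable E : rel V.
Variable w : V -> V -> R.
Variables s t : V.

Definition weighted_graph : Prop :=
  [/\ irreflexive E, symmetric E, (forall u v, connect E u v),
      (forall u v, w u v = w v u) & (forall u v, E u v -> 0 < w u v)].

Fixpoint wlen (x : V) (p : seq V) : R :=
  if p is y :: p' then w x y + wlen y p' else 0.

Definition walk (x y : V) (p : seq V) : Prop := path E x p /\ last x p = y.

Definition dist (x y : V) : R :=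
  inf [set r | exists p, walk x y p /\ r = wlen x p].

Definition stpath (q : seq V) : Prop :=
  exists p, [/\ q = s :: p, walk s t p & wlen s p = dist s t].

(* V(D^+) : vertices of D (the union of all shortest st-paths) *)
Definition VD (v : V) : Prop := exists q1 q2, stpath (q1 ++ v :: q2).

(* arcs of D^+ : edges of D oriented towards t, i.e. (u,v) with u immediately
   followed by v on some shortest st-path *)
Definition arc (u v : V) : Prop := exists q1 q2, stpath (q1 ++ u :: v :: q2).

Fixpoint dwalk (a : V) (q : seq V) : Prop :=
  if q is b :: q' then arc a b /\ dwalk b q' else True.

Definition dpath (a b : V) (q : seq V) : Prop :=
  [/\ dwalk a q, last a q = b & uniq (a :: q)].

Definition prec (x y : V) : Prop := exists q, q != [::] /\ dpath x y q.

Definition sdom (x v : V) : Prop :=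
  v != x /\ forall q, dpath s x q -> v \in s :: q.

Definition tdom (x v : V) : Prop :=
  v != x /\ forall q, dpath x t q -> v \in x :: q.

Definition Is (x i : V) : Prop :=
  sdom x i /\ forall v, sdom x v -> v != i -> sdom i v.

Definition It (x i : V) : Prop :=
  tdom x i /\ forall v, tdom x v -> v != i -> tdom i v.

Definition Cset (x v : V) : Prop := exists i, Is x i /\ prec i v /\ prec v x.

(* g(x,y) is finite (then g(x,y) = d(y,x)) :
   y ∈ V(D^+), y ∈ C(x) and x ≺ I_t(y) *)
Definition gfinite (x y : V) : Prop :=
  [/\ VD y, Cset x y & exists j, It y j /\ prec x j].

Definition ends (a : V) (q : seq V) : seq V := [:: a; last a q].

Definition int_disj (a : V) (q : seq V) (b : V) (r : seq V) : Prop :=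
  forall v, v \in a :: q -> v \in b :: r -> v \in ends a q /\ v \in ends b r.

End ShortestPathDAG.

(* Main.v *)
From Stdlib Require Import Classical.
Require Import Defs.
From HB Require Import structures.
From mathcomp Require Import all_boot all_order all_algebra.
From mathcomp Require Import classical_sets reals lra zify.
Import Order.TTheory GRing.Theory Num.Theory.
Local Open Scope ring_scope.


Set Implicit Arguments.
Unset Strict Implicit.
Unset Printing Implicit Defensive.

Section Main.
Variable R : realType.
Variable V : finType.
Variable E : rel V.
Variable w : V -> V -> R.
Variables s t : V.
Hypothesis HG : weighted_graph E w.

Local Notation d := (dist E w).
Local Notation wl := (wlen w).

Lemma wpos u v : E u v -> 0 < w u v.
Proof. by case: HG => _ _ _ _; apply. Qed.

Lemma wlen_cat x p q : wl x (p ++ q) = wl x p + wl (last x p) q.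
Proof.
elim: p x => [|y p IH] x /=; first by rewrite add0r.
by rewrite IH addrA.
Qed.

Lemma wlen_ge0 x p : path E x p -> 0 <= wl x p.
Proof.
elim: p x => [|y p IH] x //= /andP[Exy Hp].
by rewrite addr_ge0 // ?IH // ltW // wpos.
Qed.

Lemma walk_ne x y : ([set r | exists p, walk E x y p /\ r = wl x p] !=set0)%classic.
Proof.
case: HG => _ _ Hc _ _.
have /connectP[p Hp Hl] := Hc x y.
by exists (wl x p); exists p; split => //; split.
Qed.

Lemma walk_lb x y : has_lbound [set r | exists p, walk E x y p /\ r = wl x p].
Proof. by exists 0 => r [p [[Hp _] ->]]; apply: wlen_ge0. Qed.

Lemma dist_le x y p : walk E x y p -> d x y <= wl x p.
Proof. by move=> Hw; apply: (ge_inf (walk_lb x y)); exists p. Qed.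

Lemma dist_ge x y r : (forall p, walk E x y p -> r <= wl x p) -> r <= d x y.
Proof.
move=> H; apply: lb_le_inf; first exact: walk_ne.
by move=> z [p [Hp ->]]; apply: H.
Qed.

Lemma dist_ge0 x y : 0 <= d x y.
Proof. by apply: dist_ge => p [Hp _]; apply: wlen_ge0. Qed.

Lemma dist_xx x : d x x = 0.
Proof.
apply/eqP; rewrite eq_le dist_ge0 andbT.
by have := @dist_le x x [::] (conj isT erefl).
Qed.

Lemma walk_cat x y z p q : walk E x y p -> walk E y z q -> walk E x z (p ++ q).
Proof.
move=> [Hp Hl] [Hq Hl']; split; first by rewrite cat_path Hp Hl Hq.
by rewrite last_cat Hl.
Qed.

Lemma dist_tri x y z : d x z <= d x y + d y z.
Proof.
rewrite -lerBlDr; apply: dist_ge => p Hp.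
rewrite lerBlDl -lerBlDr; apply: dist_ge => q Hq.
rewrite lerBlDr; apply: (le_trans (dist_le (walk_cat Hp Hq))).
by rewrite wlen_cat (proj2 Hp) addrC.
Qed.


Lemma path_adj l1 x u v l2 : path E x (l1 ++ u :: v :: l2) -> E u v.
Proof.
elim: l1 x => [|y l1 IH] x /=; first by case/and3P.
by case/andP=> _; apply: IH.
Qed.

Lemma shortest_prefix a b p1 p2 :
  walk E a b (p1 ++ p2) -> wl a (p1 ++ p2) = d a b -> wl a p1 = d a (last a p1).
Proof.
move=> [Hp Hl] Hlen.
move: Hp; rewrite cat_path => /andP[Hp1 Hp2].
have W1 : walk E a (last a p1) p1 by [].
have W2 : walk E (last a p1) b p2 by split => //; rewrite -last_cat.
have e1 := dist_le W1; have e2 := dist_le W2.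
have e3 := dist_tri a (last a p1) b.
move: Hlen; rewrite wlen_cat => Hlen.
apply/eqP; rewrite eq_le e1 andbT.
have : wl a p1 + wl (last a p1) p2 <= d a (last a p1) + wl (last a p1) p2.
  by rewrite Hlen; apply: (le_trans e3); rewrite lerD2l.
by rewrite lerD2r.
Qed.

Local Notation h := (fun v => d s v).

Lemma arc_props u v : Defs.arc E w s t u v -> E u v /\ d s v = d s u + w u v.
Proof.
case=> q1 [q2 [p [Heq Hw Hlen]]].
case: q1 Heq => [|a q1] /= [].
  move=> -> Hp; subst p; split; first by case: Hw => /= /andP[].
  rewrite dist_xx add0r.
  have := @shortest_prefix s t [:: v] q2 Hw Hlen.
  by rewrite /= addr0 => <-.
move=> _ Hp; subst p; split; first by case: Hw => /path_adj.
have H1 := @shortest_prefix s t (q1 ++ [:: u]) (v :: q2).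
rewrite -catA /= in H1; have := H1 Hw Hlen.
have H2 := @shortest_prefix s t (q1 ++ [:: u; v]) q2.
rewrite -catA /= in H2; have := H2 Hw Hlen.
rewrite -[q1 ++ [:: u; v]]/(q1 ++ [:: u] ++ [:: v]) catA wlen_cat !last_cat /=.
by move=> <- <-; rewrite addr0.
Qed.

Lemma arc_E u v : Defs.arc E w s t u v -> E u v.
Proof. by case/arc_props. Qed.

Lemma arc_lt u v : Defs.arc E w s t u v -> d s u < d s v.
Proof.
case/arc_props => Huv ->; by rewrite ltrDl wpos.
Qed.

Local Notation dw := (dwalk E w s t).

Lemma dwalk_cat a p q : dw a (p ++ q) <-> dw a p /\ dw (last a p) q.
Proof.
elim: p a => [|b p IH] a /=; first by split => // [[]].
rewrite IH; by split => [[? []]|[[]]].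
Qed.

Definition hlt := [rel u v : V | d s u < d s v].

Lemma dwalk_hpath a q : dw a q -> path hlt a q.
Proof.
elim: q a => [|b q IH] a //= [Hab Hq].
by rewrite IH // andbT; apply: arc_lt.
Qed.

Lemma dwalk_Epath a q : dw a q -> path E a q.
Proof.
elim: q a => [|b q IH] a //= [Hab Hq].
by rewrite IH // andbT; apply: arc_E.
Qed.

Lemma hlt_trans : transitive hlt.
Proof. by move=> b a c /= H1 H2; apply: lt_trans H1 H2. Qed.

Lemma dwalk_uniq a q : dw a q -> uniq (a :: q).
Proof.
move=> H; apply: (sorted_uniq hlt_trans); first by move=> x; rewrite /= ltxx.
exact: dwalk_hpath.
Qed.

Lemma dwalk_lt a q v : dw a q -> v \in q -> d s a < d s v.
Proof.
move=> /dwalk_hpath H Hv.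
by have /allP := order_path_min hlt_trans H; apply.
Qed.

Lemma dwalk_wlen a q : dw a q -> wl a q = d s (last a q) - d s a.
Proof.
elim: q a => [|b q IH] a /= ; first by rewrite subrr.
move=> [/arc_props [_ Hb] Hq]; rewrite IH // Hb; lra.
Qed.


Local Notation dp := (dpath E w s t).
Local Notation pr := (prec E w s t).

Definition reach a b := exists q, dw a q /\ last a q = b.

Lemma dpathE a b q : dp a b q <-> dw a q /\ last a q = b.
Proof.
split; first by case.
by move=> [H1 H2]; split => //; apply: dwalk_uniq.
Qed.

Lemma reach_dpath a b : reach a b <-> exists q, dp a b q.
Proof. by split=> [[q /dpathE]|[q /dpathE]]; exists q. Qed.

Lemma reach_refl a : reach a a.
Proof. by exists [::]. Qed.

Lemma reach_trans a b c : reach a b -> reach b c -> reach a c.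
Proof.
move=> [p [Hp Hb]] [q [Hq Hc]]; exists (p ++ q); split.
  by apply/dwalk_cat; rewrite Hb.
by rewrite last_cat Hb.
Qed.

Lemma reach_le a b : reach a b -> d s a <= d s b.
Proof.
move=> [[|c q] [Hq <-]] //=.
apply: ltW; apply: (dwalk_lt Hq); by rewrite /= mem_last.
Qed.

Lemma prec_reach a b : pr a b -> reach a b.
Proof. by move=> [q [_ /dpathE H]]; exists q. Qed.

Lemma prec_lt a b : pr a b -> d s a < d s b.
Proof.
move=> [q [Hne [Hq Hl _]]]; case: q Hne Hq Hl => [//|c q] _ Hq <-.
apply: (dwalk_lt Hq); by rewrite /= mem_last.
Qed.

Lemma prec_neq a b : pr a b -> a != b.
Proof. by move/prec_lt; apply: contraTneq => ->; rewrite ltxx. Qed.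

Lemma reach_prec a b : reach a b -> a != b -> pr a b.
Proof.
move=> [[|c q] [Hq Hl]] Hab; first by rewrite -Hl eqxx in Hab.
by exists (c :: q); split => //; apply/dpathE.
Qed.

Lemma prec_reach_trans a b c : pr a b -> reach b c -> pr a c.
Proof.
move=> H1 H2; apply: reach_prec; first exact: reach_trans (prec_reach H1) H2.
have := lt_le_trans (prec_lt H1) (reach_le H2).
by apply: contraTneq => ->; rewrite ltxx.
Qed.

Lemma reach_prec_trans a b c : reach a b -> pr b c -> pr a c.
Proof.
move=> H1 H2; apply: reach_prec; first exact: reach_trans H1 (prec_reach H2).
have := le_lt_trans (reach_le H1) (prec_lt H2).
by apply: contraTneq => ->; rewrite ltxx.
Qed.

Lemma prec_trans a b c : pr a b -> pr b c -> pr a c.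
Proof. by move=> H1 H2; apply: prec_reach_trans H1 (prec_reach H2). Qed.

Lemma mem_split (x : V) (l : seq V) : x \in l -> exists l1 l2, l = l1 ++ x :: l2.
Proof. by case/splitPr => l1 l2; exists l1, l2. Qed.

Lemma split_mem (a : V) (q : seq V) v : v \in a :: q -> exists q1 q2, q = q1 ++ q2 /\ last a q1 = v.
Proof.
rewrite inE => /orP[/eqP -> | /mem_split [l1 [l2 ->]]]; first by exists [::], q.
exists (l1 ++ [:: v]), l2; rewrite -catA; split => //.
by rewrite last_cat.
Qed.

Lemma dp_split a b q v : dp a b q -> v \in a :: q ->
  exists q1 q2, [/\ q = q1 ++ q2, dp a v q1 & dp v b q2].
Proof.
move=> /dpathE [Hw Hl] /split_mem [q1 [q2 [Hq Hv]]].
exists q1, q2; split => //; apply/dpathE; subst q.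
  by case/dwalk_cat: Hw.
by case/dwalk_cat: Hw; rewrite Hv; split => //; rewrite -Hv -last_cat.
Qed.

Lemma on_dp a b q v : dp a b q -> v \in a :: q -> reach a v /\ reach v b.
Proof.
move=> H /(dp_split H) [q1 [q2 [_ H1 H2]]].
by split; apply/reach_dpath; [exists q1 | exists q2].
Qed.

Lemma on_dp_tail a b q v : dp a b q -> v \in q -> pr a v.
Proof.
move=> H Hv; apply: reach_prec.
  by apply: (proj1 (on_dp H _)); rewrite inE Hv orbT.
case: H => Hw _ _; have := dwalk_lt Hw Hv.
by apply: contraTneq => ->; rewrite ltxx.
Qed.

Lemma dp_cat a b c p q : dp a b p -> dp b c q -> dp a c (p ++ q).
Proof.
move=> /dpathE [Hp Hb] /dpathE [Hq Hc]; apply/dpathE; split.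
  by apply/dwalk_cat; rewrite Hb.
by rewrite last_cat Hb.
Qed.

Lemma stpath_dwalk l1 a q : stpath E w s t (l1 ++ a :: q) -> dw a q.
Proof.
elim: q l1 a => [|b q IH] l1 a //= H; split.
  by exists l1, q.
by apply: (IH (l1 ++ [:: a])); rewrite -catA.
Qed.

Lemma VD_reach v : VD E w s t v -> reach s v /\ reach v t.
Proof.
move=> [q1 [q2 H]].
have [p [Heq [Hp Hl] Hlen]] := H.
have Hd : dp s t p.
  apply/dpathE; split => //; rewrite Heq in H.
  exact: (@stpath_dwalk [::] s p H).
apply: (on_dp Hd); rewrite -Heq mem_cat inE eqxx orbT //.
Qed.

Lemma reach_VD v : reach s v -> reach v t -> VD E w s t v.
Proof.
move=> [q1 [H1 L1]] [q2 [H2 L2]].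
have Hw : dw s (q1 ++ q2) by apply/dwalk_cat; rewrite L1.
have Hl : last s (q1 ++ q2) = t by rewrite last_cat L1.
have Hst : stpath E w s t (s :: q1 ++ q2).
  exists (q1 ++ q2); split => //; first by split => //; apply: dwalk_Epath.
  by rewrite dwalk_wlen // Hl dist_xx subr0.
have : v \in s :: q1 ++ q2.
  by rewrite -cat_cons mem_cat -L1 mem_last.
case/mem_split => l1 [l2 Heq]; exists l1, l2; by rewrite -Heq.
Qed.


Definition nn (v : V) := #|[set u | d s v < d s u]|.

Lemma nn_lt a b : d s a < d s b -> (nn b < nn a)%N.
Proof.
move=> Hab; apply: proper_card; apply/properP; split.
  by apply/fintype.subsetP => u; rewrite !inE => H; apply: lt_trans Hab H.
by exists b; rewrite !inE ?ltxx.
Qed.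

Lemma exists_min (P : V -> Prop) (f : V -> nat) z0 :
  P z0 -> exists z, P z /\ forall z', P z' -> (f z <= f z')%N.
Proof.
have: forall m z0, (f z0 <= m)%N -> P z0 ->
    exists z, P z /\ forall z', P z' -> (f z <= f z')%N; last by apply; apply: leqnn.
elim=> [|m IH] z1 Hm Pz1.
  case: (classic (forall z', P z' -> (f z1 <= f z')%N)) => H; first by exists z1.
  have [z' Hz'] := not_all_ex_not _ _ H.
have [Pz' Hlt] := imply_to_and _ _ Hz'.
  by exfalso; apply: Hlt; apply: leq_trans Hm _.
case: (classic (forall z', P z' -> (f z1 <= f z')%N)) => H; first by exists z1.
have [z' Hz'] := not_all_ex_not _ _ H.
have [Pz' Hlt] := imply_to_and _ _ Hz'.
apply: (IH z') => //; rewrite -ltnS; apply: leq_trans Hm; by rewrite ltnNge; apply/negP.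
Qed.

Lemma int_disj_sym (a : V) q b r : int_disj a q b r -> int_disj b r a q.
Proof. by move=> H v H1 H2; have [] := H v H2 H1. Qed.

Definition onall a b z := forall q, dp a b q -> z \in a :: q.

Lemma reach_antisym a b : reach a b -> reach b a -> a = b.
Proof.
move=> H1 H2; apply/eqP; apply/negP => /negP Hne.
have := prec_lt (reach_prec H1 Hne); rewrite ltNge.
by rewrite reach_le.
Qed.

Lemma fan2_core N :
  (forall a b x, (nn a + nn b <= N)%N -> a != b -> a != x -> b != x ->
     reach a x -> reach b x -> (forall z, z != x -> onall a x z -> onall b x z -> False) ->
     exists qa qb, [/\ dp a x qa, dp b x qb & int_disj a qa b qb]) ->
  forall a b x, (nn a + nn b <= N.+1)%N -> ~ reach b a -> a != b -> a != x -> b != x ->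
     reach a x -> reach b x -> (forall z, z != x -> onall a x z -> onall b x z -> False) ->
     exists qa qb, [/\ dp a x qa, dp b x qb & int_disj a qa b qb].
Proof.
move=> IH a b x HN Hba Hab Hax Hbx Rax Rbx Hsep.
have [qb Hqb] := proj1 (reach_dpath b x) Rbx.
have notab : forall v, v \in b :: qb -> v != a.
  move=> v Hv; apply/eqP => Hva; subst v; apply: Hba.
  exact: (proj1 (on_dp Hqb Hv)).
case: (classic (Defs.arc E w s t a x)) => [Harc|Hnarc].
  exists [:: x], qb; split => //.
    by apply/dpathE.
  move=> v; rewrite !inE => /orP[/eqP ->|/eqP ->] Hv.
    by have := notab a Hv; rewrite eqxx.
  case: Hqb => _ Hl _.
  by split; rewrite /ends /= ?Hl ?inE ?eqxx ?orbT.
case: (classic (exists a', [/\ Defs.arc E w s t a a', reach a' x, a' != b, a' != x &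
   forall z, z != x -> onall a' x z -> onall b x z -> False])) => [[a' [Ha' Ra' Ha'b Ha'x Hs']]|Hne].
  have Hlt : (nn a' + nn b <= N)%N.
    rewrite -ltnS; apply: leq_trans HN; rewrite ltn_add2r.
    by apply: nn_lt; apply: arc_lt.
  have [qa' [qb' [Hqa' Hqb' Hd]]] := IH a' b x Hlt Ha'b Ha'x Hbx Ra' Rbx Hs'.
  have notab' : forall v, v \in b :: qb' -> v != a.
    move=> v Hv; apply/eqP => Hva; subst v; apply: Hba.
    exact: (proj1 (on_dp Hqb' Hv)).
  exists (a' :: qa'), qb'; split => //.
    case/dpathE: Hqa' => H1 H2; by apply/dpathE.
  move=> v; rewrite inE => /orP[/eqP ->|Hv] Hv'.
    by have := notab' a Hv'; rewrite eqxx.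
  have [E1 E2] := Hd v Hv Hv'.
  split => //.
  move: E1; rewrite /ends !inE => /orP[/eqP Hva'|/eqP ->].
    move: E2; rewrite /ends !inE; case: Hqb' => _ -> _.
    by rewrite Hva' (negbTE Ha'b) (negbTE Ha'x).
  by rewrite eqxx orbT.
(* no good successor: build a separator *)
exfalso.
have Sb : b != x /\ onall b x b by split => // q _; rewrite inE eqxx.
have [zs [[Hzsx Hzs] Hmin]] := @exists_min (fun z => z != x /\ onall b x z) nn b Sb.
apply: (Hsep zs Hzsx _ Hzs) => q Hq.
case: q Hq => [|a' q'] Hq; first by case: Hq => _ /= Hl; rewrite Hl eqxx in Hax.
case/dpathE: Hq => [[Harc' Hw'] Hl'].
have Hq' : dp a' x q' by apply/dpathE.
have [Ha'x|Ha'x] := eqVneq a' x; first by subst a'.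
have [Ha'b|Ha'b] := eqVneq a' b.
  subst a'; by rewrite inE (Hzs q' Hq') orbT.
have Ra' : reach a' x by apply/reach_dpath; exists q'.
have [z [Hzx Hza' Hzb]] : exists z, [/\ z != x, onall a' x z & onall b x z].
  apply: NNPP => Hn; apply: Hne; exists a'; split => // z H1 H2 H3.
  by apply: Hn; exists z.
have Hmz := Hmin z (conj Hzx Hzb).
have Hz := Hza' q' Hq'.
have [q1 [q2 [Eq _ Hq2]]] := dp_split Hq' Hz.
suff : zs \in z :: q2.
  rewrite inE => /orP[/eqP ->|H]; first by rewrite inE Hz orbT.
  by rewrite !inE Eq mem_cat H !orbT.
have Hzqb := Hzb qb Hqb.
have [r1 [r2 [_ Hr1 _]]] := dp_split Hqb Hzqb.
have := Hzs _ (dp_cat Hr1 Hq2).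
rewrite -cat_cons mem_cat => /orP[H|H]; last by rewrite inE H orbT.
have Rz := proj2 (on_dp Hr1 H).
have [Hzz|Hzz] := eqVneq zs z; first by rewrite Hzz inE eqxx.
have := nn_lt (prec_lt (reach_prec Rz Hzz)).
by rewrite ltnNge Hmz.
Qed.


Lemma fan2 N : forall a b x, (nn a + nn b <= N)%N -> a != b -> a != x -> b != x ->
     reach a x -> reach b x -> (forall z, z != x -> onall a x z -> onall b x z -> False) ->
     exists qa qb, [/\ dp a x qa, dp b x qb & int_disj a qa b qb].
Proof.
elim: N => [|N IH] a b x HN Hab Hax Hbx Rax Rbx Hsep.
  have := nn_lt (prec_lt (reach_prec Rax Hax)); lia.
case: (classic (reach b a)) => Hba; last exact: (fan2_core IH HN Hba).
have Hab' : ~ reach a b by move=> H; move/eqP: Hab; apply; apply: reach_antisym.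
have [qb [qa [H1 H2 H3]]] := fan2_core IH (a := b) (b := a) (x := x)
  ltac:(by rewrite addnC) Hab' ltac:(by rewrite eq_sym) Hbx Hax Rbx Rax
  (fun z H1 H2 H3 => Hsep z H1 H3 H2).
by exists qa, qb; split => //; apply: int_disj_sym.
Qed.

Local Notation tdom := (tdom E w s t).

Lemma It_exists z : reach z t -> z != t -> exists k, It E w s t z k.
Proof.
move=> Rzt Hzt.
have [P HP] := proj1 (reach_dpath z t) Rzt.
have Tt : tdom z t.
  split; first by rewrite eq_sym.
  by move=> q [_ <- _]; apply: mem_last.
have [k [Hk Hmax]] := @exists_min (tdom z) (fun v => #|V| - nn v)%N t Tt.
exists k; split => // v Hv Hvk; split => // q Hq.
have [P1 [P2 [_ HP1 _]]] := dp_split HP (proj2 Hk P HP).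
have := proj2 Hv _ (dp_cat HP1 Hq).
rewrite -cat_cons mem_cat => /orP[H|H]; last by rewrite inE H orbT.
have Rvk := proj2 (on_dp HP1 H).
have := nn_lt (prec_lt (reach_prec Rvk Hvk)).
have := Hmax v Hv.
have : (nn v <= #|V|)%N by apply: max_card.
lia.
Qed.

Lemma dist_dec y z x : pr y z -> reach z x -> d z x < d y x.
Proof.
move=> Hyz Rzx.
have [q [Hq Hl]] := Rzx.
have e1 : d z x <= d s x - d s z.
  have := @dist_le z x q (conj (dwalk_Epath Hq) Hl).
  by rewrite dwalk_wlen // Hl.
have e2 := dist_tri s y x.
have e3 := prec_lt Hyz.
lra.
Qed.


Lemma main_lemma x y :
  VD E w s t x -> x != s ->
  gfinite E w s t x y ->
  (forall z, gfinite E w s t x z -> d y x <= d z x) ->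
  exists q1 q2 q3,
    [/\ dp s x q1, dp y x q2 & dp y t q3] /\
    [/\ int_disj s q1 y q2, int_disj s q1 y q3 & int_disj y q2 y q3].
Proof.
move=> HVx Hxs [HVy [i [Hi [Hiy Hyx]]] [j [Hj Hxj]]] Hmin.
have [Rsx Rxt] := VD_reach HVx.
have [Rsy Ryt] := VD_reach HVy.
have [Px HPx] := proj1 (reach_dpath s x) Rsx.
have Rsi : reach s i by apply: (proj1 (on_dp HPx (proj2 (proj1 Hi) Px HPx))).
have Hsy : pr s y by apply: reach_prec_trans Rsi Hiy.
have T : forall N z, (nn z <= N)%N -> pr y z -> pr z x -> tdom z x.
  elim=> [|N IH] z HN Hyz Hzx.
    have := nn_lt (prec_lt Hzx); lia.
  have Rzt : reach z t by apply: reach_trans (prec_reach Hzx) Rxt.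
  have Hzt : z != t.
    apply/eqP => Ezt; subst z.
    have := lt_le_trans (prec_lt Hzx) (reach_le Rxt); by rewrite ltxx.
  have [k [Hkt Hk']] := It_exists Rzt Hzt.
  case: (classic (pr x k)) => Hxk.
    have Hg : gfinite E w s t x z.
      split.
      - by apply: reach_VD => //; apply: reach_trans Rsy (prec_reach Hyz).
      - by exists i; split => //; split => //; apply: prec_trans Hiy Hyz.
      - by exists k.
    have := Hmin z Hg; have := dist_dec Hyz (prec_reach Hzx).
    by rewrite ltNge => /negbTE ->.
  have [P [_ HP]] := Hzx.
  have [Q HQ] := proj1 (reach_dpath x t) Rxt.
  have := proj2 Hkt _ (dp_cat HP HQ).
  rewrite -cat_cons mem_cat => /orP[H|H]; last by exfalso; apply: Hxk; apply: on_dp_tail HQ H.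
  have Rkx := proj2 (on_dp HP H).
  have [Ekx|Ekx] := eqVneq k x; first by rewrite -Ekx.
  have Hzk : pr z k by apply: reach_prec (proj1 (on_dp HP H)) _; rewrite eq_sym; case: Hkt.
  have Hkx : pr k x by apply: reach_prec Rkx Ekx.
  have Tk := IH k ltac:(have := nn_lt (prec_lt Hzk); lia) (prec_trans Hyz Hzk) Hkx.
  split; first by rewrite eq_sym; apply: prec_neq.
  move=> q Hq.
  have Hkq := proj2 Hkt q Hq.
  have [q1 [q2 [Eq _ Hq2]]] := dp_split Hq Hkq.
  have := proj2 Tk q2 Hq2; rewrite inE => /orP[/eqP Exk|H2].
    by rewrite Exk eqxx in Ekx.
  by rewrite Eq -cat_cons mem_cat H2 orbT.
have NT : ~ tdom y x.
  move=> Hyx'.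
  have [Py HPy] := proj1 (reach_dpath y t) Ryt.
  have Rjt := proj2 (on_dp HPy (proj2 (proj1 Hj) Py HPy)).
  have Tj := proj2 Hj x Hyx' (prec_neq Hxj).
  have [Qj HQj] := proj1 (reach_dpath j t) Rjt.
  have Rjx := proj1 (on_dp HQj (proj2 Tj Qj HQj)).
  have := lt_le_trans (prec_lt Hxj) (reach_le Rjx); by rewrite ltxx.
have [Q [HQ HxQ]] : exists Q, dp y t Q /\ x \notin y :: Q.
  apply: NNPP => Hn; apply: NT; split; first by rewrite eq_sym; apply: prec_neq.
  move=> q Hq; apply: NNPP => Hx; apply: Hn; exists q; split => //.
  by apply/negP.
have M7 : forall v, v \in Q -> ~ reach v x.
  move=> v Hv Rvx.
  have Hvx : v != x.
    by apply: contraNneq HxQ => <-; rewrite inE Hv orbT.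
  have Tv := T _ v (leqnn _) (on_dp_tail HQ Hv) (reach_prec Rvx Hvx).
  have Hv' : v \in y :: Q by rewrite inE Hv orbT.
  have [q1 [q2 [Eq _ Hq2]]] := dp_split HQ Hv'.
  have := proj2 Tv q2 Hq2; rewrite inE => /orP[/eqP Exv|H2].
    by rewrite Exv eqxx in Hvx.
  by move: HxQ; rewrite Eq -cat_cons mem_cat H2 orbT.
have Hsep : forall z, z != x -> onall s x z -> onall y x z -> False.
  move=> z Hzx Hsz Hyz.
  have [Py [_ HPy]] := Hyx.
  have Ryz := proj1 (on_dp HPy (Hyz Py HPy)).
  have [Ezi|Ezi] := eqVneq z i.
    subst z; have := prec_neq (reach_prec_trans Ryz Hiy); by rewrite eqxx.
  have Hsi := proj2 Hi z (conj Hzx Hsz) Ezi.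
  have [Pi HPi] := proj1 (reach_dpath s i) Rsi.
  have Rzi := proj2 (on_dp HPi (proj2 Hsi Pi HPi)).
  have := prec_neq (reach_prec_trans (reach_trans Ryz Rzi) Hiy); by rewrite eqxx.
have [qa [qb [Hqa Hqb Hd]]] := @fan2 (nn s + nn y)%N s y x (leqnn _) (prec_neq Hsy)
   ltac:(by rewrite eq_sym) (prec_neq Hyx) Rsx (prec_reach Hyx) Hsep.
exists qa, qb, Q; split; split => //.
- move=> v Hv1 Hv2; exfalso.
  move: Hv2; rewrite inE => /orP[/eqP Evy|Hv2]; last first.
    by apply: (M7 v Hv2); apply: (proj2 (on_dp Hqa Hv1)).
  subst v.
  have [E1 _] := Hd y Hv1 (mem_head _ _).
  move: E1; rewrite /ends !inE; case: Hqa => _ -> _.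
  by rewrite eq_sym (negbTE (prec_neq Hsy)) (negbTE (prec_neq Hyx)).
- move=> v Hv1 Hv2.
  move: Hv2; rewrite inE => /orP[/eqP Evy|Hv2]; last first.
    by exfalso; apply: (M7 v Hv2); apply: (proj2 (on_dp Hqb Hv1)).
  by subst v; rewrite /ends !inE eqxx.
Qed.

End Main.

Unset Implicit Arguments.

Theorem lemma6 (R : realType) (V : finType) (E : rel V) (w : V -> V -> R)
    (s t x ystar : V) :
  weighted_graph E w ->
  VD E w s t x -> x != s ->
  (* g^*(x) <> oo *)
  (exists y, gfinite E w s t x y) ->
  (* g(x, y^* ) = g^*(x) *)
  gfinite E w s t x ystar ->
  (forall y, gfinite E w s t x y -> dist E w ystar x <= dist E w y x) ->
  (* (x, y^* ) is valid *)
  exists q1 q2 q3,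
    [/\ dpath E w s t s x q1, dpath E w s t ystar x q2 &
        dpath E w s t ystar t q3] /\
    [/\ int_disj s q1 ystar q2, int_disj s q1 ystar q3 &
        int_disj ystar q2 ystar q3].
Proof.
move=> HG HVx Hxs _ Hg Hmin.
exact: (main_lemma HG HVx Hxs Hg Hmin).
Qed.
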